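(* Let $\tilde f$ satisfy (H1), (H2) and (H3). For every real $M>0$ there exists $n_0\in\mathbb{N}$ such that for every compact set $\tilde K\subset\tilde A_0$ with $\mathrm{diam}\,p_1(\tilde K)\le M$ and every integer $n$ with $|n|\ge n_0$, we have $\tilde f^n(\tilde K)\cap\tilde K=\emptyset$.
   Context: Let $\tilde f$ be a homeomorphism of $\mathbb{R}^2$ isotopic to the identity and commuting with $T(x,y)=(x+1,y)$; $p_1$ is the first coordinate projection. For a horizontal line $\Gamma$, $U^+_\Gamma$ and $U^-_\Gamma$ denote the open half-planes above and below $\Gamma$. Hypotheses: (H1) $\Gamma_0,\Gamma_1,\Gamma_2$ are horizontal lines with $\Gamma_0\subset U^+_{\Gamma_1}$, $\Gamma_1\subset U^+_{\Gamma_2}$, and $\tilde f(\Gamma_j)\subset U^-_{\Gamma_j}$ for $j=0,1,2$; (H2) $\tilde f^n(\Gamma_0)\cap\Gamma_2\ne\emptyset$ for every integer $n\ge1$; (H3) for $i\in\{0,1\}$, letting $\tilde A_i$ be the closed band between $\Gamma_i$ and $\Gamma_{i+1}$, the sets $\Theta(\tilde A_0),\Theta(\tilde A_1)$ are non-empty and $\rho_{\Theta(\tilde A_0)}(\tilde f)\subset(0,+\infty)$, $\rho_{\Theta(\tilde A_1)}(\tilde f)\subset(-\infty,0)$. Here $\Theta(\tilde E)=\{x\in\tilde E:\tilde f^n(x)\in\tilde E\ \forall n\in\mathbb{Z}\}$, and for a closed $T$-invariant set $\tilde E$ contained in a horizontal band, $\rho_{\tilde E}(\tilde f)=\bigcap_{m\ge1}\mathrm{Cl}\big(\bigcup_{n\ge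 m}\{\frac1n(p_1(\tilde f^n(\tilde z))-p_1(\tilde z)): \tilde z\in\tilde E,\ \tilde f^n(\tilde z)\in\tilde E\}\big)$, closure in $\overline{\mathbb{R}}=\mathbb{R}\cup\{\pm\infty\}$. *)

(* Defs.v *)
From Stdlib Require Import Reals ZArith List.
Open Scope R_scope.

Definition pt : Type := (R * R)%type.

(* The max-metric on R^2 (induces the usual topology). *)
Definition dist2 (z w : pt) : R :=
  Rmax (Rabs (fst z - fst w)) (Rabs (snd z - snd w)).

Definition continuous2 (f : pt -> pt) : Prop :=
  forall z eps, 0 < eps -> exists delta, 0 < delta /\
    forall w, dist2 z w < delta -> dist2 (f z) (f w) < eps.

Definition is_homeo (f : pt -> pt) : Prop :=
  continuous2 f /\ exists g : pt -> pt, continuous2 g /\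
    (forall z, g (f z) = z) /\ (forall z, f (g z) = z).

Definition isotopic_to_id (f : pt -> pt) : Prop :=
  exists H : R -> pt -> pt,
    (forall t z eps, 0 <= t <= 1 -> 0 < eps -> exists delta, 0 < delta /\
       forall s w, 0 <= s <= 1 -> Rabs (t - s) < delta -> dist2 z w < delta ->
         dist2 (H t z) (H s w) < eps) /\
    (forall t, 0 <= t <= 1 -> is_homeo (H t)) /\
    (forall z, H 0 z = z) /\ (forall z, H 1 z = f z).

Definition T (z : pt) : pt := (fst z + 1, snd z).

Definition p1 (z : pt) : R := fst z.

Definition fpow (f finv : pt -> pt) (n : Z) (z : pt) : pt :=
  match n with
  | Z0 => z
  | Zpos p => Nat.iter (Pos.to_nat p) f z
  | Zneg p => Nat.iter (Pos.to_nat p) finv z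
  end.

Definition hline (c : R) (z : pt) : Prop := snd z = c.
Definition Uplus (c : R) (z : pt) : Prop := c < snd z.
Definition Uminus (c : R) (z : pt) : Prop := snd z < c.

Definition band (chi clo : R) (z : pt) : Prop := clo <= snd z <= chi.

Definition Theta (f finv : pt -> pt) (E : pt -> Prop) (z : pt) : Prop :=
  E z /\ forall n : Z, E (fpow f finv n z).

Inductive ERbar : Type := Fin (r : R) | PInf | MInf.

Definition in_closure (v : ERbar) (S : R -> Prop) : Prop :=
  match v with
  | Fin a => forall eps, 0 < eps -> exists r, S r /\ Rabs (r - a) < eps
  | PInf => forall B, exists r, S r /\ B < r
  | MInf => forall B, exists r, S r /\ r < B
  end.

Definition rot_set (f finv : pt -> pt) (E : pt -> Prop) (v : ERbar) : Prop :=
  forall m : nat, (1 <= m)%nat ->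
    in_closure v (fun r => exists (n : nat) (z : pt),
      (m <= n)%nat /\ E z /\ E (fpow f finv (Z.of_nat n) z) /\
      r = (p1 (fpow f finv (Z.of_nat n) z) - p1 z) / INR n).

Definition open2 (U : pt -> Prop) : Prop :=
  forall z, U z -> exists eps, 0 < eps /\ forall w, dist2 z w < eps -> U w.

Definition compact2 (K : pt -> Prop) : Prop :=
  forall (I : Type) (U : I -> pt -> Prop),
    (forall i, open2 (U i)) -> (forall z, K z -> exists i, U i z) ->
    exists l : list I, forall z, K z -> exists i, In i l /\ U i z.

(* Main.v *)
Require Import Defs.
From Stdlib Require Import Reals ZArith List Lra Lia Classical ClassicalEpsilon.
Open Scope R_scope.

Definition contR (F : pt -> R) : Prop :=
  forall z eps, 0 < eps -> exists d, 0 < d /\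
    forall w, dist2 z w < d -> Rabs (F z - F w) < eps.

Lemma dist2_fst z w : Rabs (fst z - fst w) <= dist2 z w.
Proof. unfold dist2; apply Rmax_l. Qed.
Lemma dist2_snd z w : Rabs (snd z - snd w) <= dist2 z w.
Proof. unfold dist2; apply Rmax_r. Qed.
Lemma dist2_lt z w d : Rabs (fst z - fst w) < d -> Rabs (snd z - snd w) < d -> dist2 z w < d.
Proof. intros; unfold dist2; apply Rmax_lub_lt; auto. Qed.

Lemma contR_fst : contR fst.
Proof. intros z e He; exists e; split; auto; intros w Hw; pose proof (dist2_fst z w); lra. Qed.
Lemma contR_snd : contR snd.
Proof. intros z e He; exists e; split; auto; intros w Hw; pose proof (dist2_snd z w); lra. Qed.

Lemma contR_comp F g : contR F -> continuous2 g -> contR (fun z => F (g z)).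
Proof.
  intros HF Hg z e He. destruct (HF (g z) e He) as [d1 [Hd1 H1]].
  destruct (Hg z d1 Hd1) as [d2 [Hd2 H2]]. exists d2; split; auto.
Qed.

Lemma contR_minus F G : contR F -> contR G -> contR (fun z => F z - G z).
Proof.
  intros HF HG z e He. destruct (HF z (e/2)) as [d1 [Hd1 H1]]; [lra|].
  destruct (HG z (e/2)) as [d2 [Hd2 H2]]; [lra|].
  exists (Rmin d1 d2); split; [apply Rmin_pos; auto|].
  intros w Hw. pose proof (Rmin_l d1 d2); pose proof (Rmin_r d1 d2).
  specialize (H1 w ltac:(lra)); specialize (H2 w ltac:(lra)).
  replace (F z - G z - (F w - G w)) with ((F z - F w) - (G z - G w)) by ring.
  eapply Rle_lt_trans; [apply Rabs_triang|]. rewrite Rabs_Ropp. lra.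
Qed.

Lemma cont2_comp g h : continuous2 g -> continuous2 h -> continuous2 (fun z => g (h z)).
Proof.
  intros Hg Hh z e He. destruct (Hg (h z) e He) as [d1 [Hd1 H1]].
  destruct (Hh z d1 Hd1) as [d2 [Hd2 H2]]. exists d2; split; auto.
Qed.

Lemma cont2_iter g k : continuous2 g -> continuous2 (Nat.iter k g).
Proof.
  intros Hg; induction k; simpl.
  - intros z e He; exists e; split; auto.
  - apply (cont2_comp g (Nat.iter k g)); auto.
Qed.

Lemma contR_path F x0 y0 dx dy : contR F ->
  continuity (fun t => F (x0 + t*dx, y0 + t*dy)).
Proof.
  intros HF t. unfold continuity_pt, continue_in, limit1_in, limit_in; simpl.
  intros e He. destruct (HF (x0 + t*dx, y0 + t*dy) e He) as [d [Hd H]].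
  exists (d / (1 + Rabs dx + Rabs dy)). split.
  { apply Rdiv_lt_0_compat; auto. pose proof (Rabs_pos dx); pose proof (Rabs_pos dy); lra. }
  intros s [_ Hs]. unfold R_dist in *. rewrite Rabs_minus_sym. apply H.
  pose proof (Rabs_pos dx); pose proof (Rabs_pos dy).
  assert (Hp : 0 < 1 + Rabs dx + Rabs dy) by lra.
  assert (Hst : Rabs (s - t) * (1 + Rabs dx + Rabs dy) < d).
  { apply (Rmult_lt_compat_r (1 + Rabs dx + Rabs dy)) in Hs; auto.
    unfold Rdiv in Hs; rewrite Rmult_assoc, Rinv_l in Hs; lra. }
  pose proof (Rabs_pos (s-t)).
  apply dist2_lt; simpl.
  - replace (x0 + t*dx - (x0 + s*dx)) with ((t - s)*dx) by ring.
    rewrite Rabs_mult, <- Rabs_Ropp. replace (-(t-s)) with (s-t) by ring.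
    assert (Rabs (s-t) * Rabs dx <= Rabs (s-t) * (1 + Rabs dx + Rabs dy)) by (apply Rmult_le_compat_l; lra). lra.
  - replace (y0 + t*dy - (y0 + s*dy)) with ((t - s)*dy) by ring.
    rewrite Rabs_mult, <- Rabs_Ropp. replace (-(t-s)) with (s-t) by ring.
    assert (Rabs (s-t) * Rabs dy <= Rabs (s-t) * (1 + Rabs dx + Rabs dy)) by (apply Rmult_le_compat_l; lra). lra.
Qed.

Lemma ivt_seg F x0 y0 dx dy : contR F ->
  F (x0, y0) * F (x0 + dx, y0 + dy) <= 0 ->
  exists t, 0 <= t <= 1 /\ F (x0 + t*dx, y0 + t*dy) = 0.
Proof.
  intros HF H. destruct (IVT_cor (fun t => F (x0 + t*dx, y0 + t*dy)) 0 1
    (contR_path F x0 y0 dx dy HF)) as [t [Ht Hz]]; [lra| |].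
  - replace (x0 + 0*dx) with x0 by ring. replace (y0 + 0*dy) with y0 by ring.
    replace (x0 + 1*dx) with (x0+dx) by ring. replace (y0 + 1*dy) with (y0+dy) by ring. exact H.
  - exists t; auto.
Qed.

Lemma dich (f finv : pt -> pt) c :
  continuous2 f -> continuous2 finv ->
  (forall z, finv (f z) = z) -> (forall z, f (finv z) = z) ->
  (forall z, snd z = c -> snd (f z) < c) ->
  (forall z, snd z < c -> snd (f z) < c) \/ (forall z, c < snd z -> snd (f z) < c).
Proof.
  intros Hf Hfi H1 H2 Hc.
  destruct (classic (forall z, snd z < c -> snd (f z) < c)) as [HA|HA]; [left; auto|right].
  intros b0 Hb0. apply Rnot_le_lt; intro Hfb0.
  apply not_all_ex_not in HA. destruct HA as [a0 Ha0].
  apply imply_to_and in Ha0. destruct Ha0 as [Ha0 Hfa0]. apply Rnot_lt_le in Hfa0.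
  assert (HG : contR (fun z => snd (f z) - c)).
  { apply contR_minus. apply contR_comp; auto. apply contR_snd.
    intros z e He; exists 1; split; [lra|]; intros; rewrite Rminus_diag, Rabs_R0; auto. }
  destruct (ivt_seg (fun z => snd (f z) - c) (fst a0) (snd a0) 0 (c - snd a0) HG) as [ta [Hta Ha]].
  { assert (E : (fst a0 + 0, snd a0 + (c - snd a0)) = (fst a0 + 0, c)) by (f_equal; ring).
    rewrite E. pose proof (Hc (fst a0 + 0, c) eq_refl). rewrite <- surjective_pairing.
    nra. }
  set (a := (fst a0 + ta*0, snd a0 + ta*(c - snd a0))) in Ha.
  assert (Hay : snd a < c).
  { destruct (Req_dec ta 1) as [E|E].
    - exfalso. subst a; rewrite E in Ha. simpl in Ha.
      pose proof (Hc (fst a0 + 1*0, snd a0 + 1*(c - snd a0)) ltac:(simpl; ring)). lra.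
    - subst a; simpl. assert (ta*(c - snd a0) < 1*(c-snd a0)) by (apply Rmult_lt_compat_r; lra). lra. }
  destruct (ivt_seg (fun z => snd (f z) - c) (fst b0) (snd b0) 0 (c - snd b0) HG) as [tb [Htb Hb]].
  { assert (E : (fst b0 + 0, snd b0 + (c - snd b0)) = (fst b0 + 0, c)) by (f_equal; ring).
    rewrite E. pose proof (Hc (fst b0 + 0, c) eq_refl). rewrite <- surjective_pairing.
    nra. }
  set (b := (fst b0 + tb*0, snd b0 + tb*(c - snd b0))) in Hb.
  assert (Hby : c < snd b).
  { destruct (Req_dec tb 1) as [E|E].
    - exfalso. subst b; rewrite E in Hb. simpl in Hb.
      pose proof (Hc (fst b0 + 1*0, snd b0 + 1*(c - snd b0)) ltac:(simpl; ring)). lra.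
    - subst b; simpl. assert (tb*(snd b0 - c) < 1*(snd b0 - c)) by (apply Rmult_lt_compat_r; lra). lra. }
  clearbody a b.
  assert (HG2 : contR (fun z => snd (finv z) - c)).
  { apply contR_minus. apply contR_comp; auto. apply contR_snd.
    intros z e He; exists 1; split; [lra|]; intros; rewrite Rminus_diag, Rabs_R0; auto. }
  destruct (ivt_seg (fun z => snd (finv z) - c) (fst (f a)) c (fst (f b) - fst (f a)) 0 HG2) as [s [Hs Hq]].
  { assert (Ea : (fst (f a), c) = f a) by (rewrite (surjective_pairing (f a)); f_equal; simpl; lra).
    assert (Eb : (fst (f a) + (fst (f b) - fst (f a)), c + 0) = f b)
      by (rewrite (surjective_pairing (f b)); f_equal; simpl; lra).
    rewrite Ea, Eb, !H1. nra. }
  simpl in Hq. pose proof (Hc (finv (fst (f a) + s * (fst (f b) - fst (f a)), c + s * 0)) ltac:(lra)).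
  rewrite H2 in H. simpl in H. lra.
Qed.

Section FP.
Variables (f finv : pt -> pt).
Hypothesis Hinv1 : forall z, finv (f z) = z.
Hypothesis Hinv2 : forall z, f (finv z) = z.

Lemma fpow_nat n z : fpow f finv (Z.of_nat n) z = Nat.iter n f z.
Proof. destruct n; simpl; auto. rewrite SuccNat2Pos.id_succ; auto. Qed.

Lemma fpow_negnat n z : fpow f finv (- Z.of_nat n) z = Nat.iter n finv z.
Proof. destruct n; simpl; auto. rewrite SuccNat2Pos.id_succ; auto. Qed.

Lemma Z_natcases (n : Z) : exists k, n = Z.of_nat k \/ n = (- Z.of_nat k)%Z.
Proof. exists (Z.abs_nat n). lia. Qed.

Lemma fpow_succ n z : fpow f finv (n + 1) z = f (fpow f finv n z).
Proof.
  destruct (Z_natcases n) as [k [E|E]]; subst.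
  - replace (Z.of_nat k + 1)%Z with (Z.of_nat (S k)) by lia.
    rewrite !fpow_nat; reflexivity.
  - destruct k as [|k].
    + reflexivity.
    + replace (- Z.of_nat (S k) + 1)%Z with (- Z.of_nat k)%Z by lia.
      rewrite !fpow_negnat. simpl. rewrite Hinv2; reflexivity.
Qed.

Lemma fpow_pred n z : fpow f finv (n - 1) z = finv (fpow f finv n z).
Proof.
  replace n with ((n - 1) + 1)%Z at 2 by lia. rewrite fpow_succ, Hinv1; reflexivity.
Qed.

Lemma fpow_add a b z : fpow f finv (a + b) z = fpow f finv a (fpow f finv b z).
Proof.
  revert z. induction a using Z.peano_ind; intro z.
  - reflexivity.
  - replace (Z.succ a + b)%Z with ((a + b) + 1)%Z by lia. unfold Z.succ.
    rewrite !fpow_succ, IHa; reflexivity.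
  - replace (Z.pred a + b)%Z with ((a + b) - 1)%Z by lia. unfold Z.pred.
    replace (a + -1)%Z with (a - 1)%Z by lia.
    rewrite !fpow_pred, IHa; reflexivity.
Qed.

Lemma fpow_nat_add (i : nat) j z :
  fpow f finv j (Nat.iter i f z) = fpow f finv (j + Z.of_nat i) z.
Proof. rewrite fpow_add, fpow_nat; reflexivity. Qed.

End FP.

Definition Tk (k : Z) (z : pt) : pt := (fst z + IZR k, snd z).

Lemma commT_Tk (g : pt -> pt) : (forall z, g (T z) = T (g z)) ->
  forall k z, g (Tk k z) = Tk k (g z).
Proof.
  intros HT k. induction k using Z.peano_ind; intro z.
  - unfold Tk; simpl. rewrite !Rplus_0_r, <- !surjective_pairing; reflexivity.
  - assert (E : forall w, Tk (Z.succ k) w = T (Tk k w)).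
    { intro w; unfold Tk, T; simpl. rewrite succ_IZR. f_equal; ring. }
    rewrite !E, HT, IHk; reflexivity.
  - set (z' := (fst z - 1, snd z)).
    assert (Ez : T z' = z) by (unfold T, z'; simpl; rewrite (surjective_pairing z) at 3; f_equal; ring).
    assert (E1 : Tk (Z.pred k) z = Tk k z') by (unfold Tk, z'; simpl; unfold Z.pred; rewrite plus_IZR; f_equal; ring).
    rewrite E1, IHk. rewrite <- Ez, HT. unfold Tk, T; simpl. unfold Z.pred; rewrite plus_IZR. f_equal; ring.
Qed.

Lemma commT_iter (g : pt -> pt) : (forall z, g (T z) = T (g z)) ->
  forall n z, Nat.iter n g (T z) = T (Nat.iter n g z).
Proof. intros HT n; induction n; intro z; simpl; auto. rewrite IHn, HT; auto. Qed.

Lemma commT_inv (f finv : pt -> pt) : (forall z, finv (f z) = z) -> (forall z, f (finv z) = z) ->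
  (forall z, f (T z) = T (f z)) -> forall z, finv (T z) = T (finv z).
Proof.
  intros H1 H2 HT z. rewrite <- (H1 (T (finv z))). rewrite HT, H2; reflexivity.
Qed.

Lemma commT_fpow f finv : (forall z, finv (f z) = z) -> (forall z, f (finv z) = z) ->
  (forall z, f (T z) = T (f z)) -> forall n z, fpow f finv n (T z) = T (fpow f finv n z).
Proof.
  intros H1 H2 HT n z. destruct n; simpl; auto; apply commT_iter; auto.
  apply (commT_inv f finv); auto.
Qed.

Lemma invT_Tk (F : pt -> R) : (forall z, F (T z) = F z) -> forall k z, F (Tk k z) = F z.
Proof.
  intros HT k. induction k using Z.peano_ind; intro z.
  - unfold Tk; simpl. rewrite Rplus_0_r, <- surjective_pairing; reflexivity.
  - assert (E : forall w, Tk (Z.succ k) w = T (Tk k w)).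
    { intro w; unfold Tk, T; simpl. rewrite succ_IZR. f_equal; ring. }
    rewrite E, HT, IHk; reflexivity.
  - set (z' := (fst z - 1, snd z)).
    assert (Ez : T z' = z) by (unfold T, z'; simpl; rewrite (surjective_pairing z) at 3; f_equal; ring).
    assert (E1 : Tk (Z.pred k) z = Tk k z') by (unfold Tk, z'; simpl; unfold Z.pred; rewrite plus_IZR; f_equal; ring).
    rewrite E1, IHk, <- Ez at 1. rewrite HT. reflexivity.
Qed.

Definition cluster (u : nat -> pt) (w : pt) : Prop :=
  forall eps, 0 < eps -> forall N, exists p, (N <= p)%nat /\ dist2 (u p) w < eps.

Lemma dist2_sym z w : dist2 z w = dist2 w z.
Proof. unfold dist2. rewrite (Rabs_minus_sym (fst z)), (Rabs_minus_sym (snd z)); auto. Qed.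

Lemma ValAdh_eps un l : ValAdh un l -> forall eps, 0 < eps -> forall N,
  exists p, (N <= p)%nat /\ Rabs (un p - l) < eps.
Proof.
  intros H e He N. destruct (H (disc l (mkposreal e He)) N) as [p [Hp Hv]].
  - exists (mkposreal e He); intros x Hx; auto.
  - exists p; split; auto.
Qed.

Lemma small_inv eps : 0 < eps -> exists K, / (INR K + 1) < eps.
Proof.
  intros He. destruct (INR_unbounded (/ eps)) as [K HK]. exists K.
  pose proof (pos_INR K).
  apply (Rmult_lt_reg_l (INR K + 1)); [lra|]. rewrite Rinv_r; [|lra].
  apply (Rmult_lt_reg_l (/eps)); [apply Rinv_0_lt_compat; auto|].
  rewrite Rmult_1_r. replace (/eps * ((INR K + 1) * eps)) with (INR K + 1) by (field; lra). lra.
Qed.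

Lemma inv_mono (k K : nat) : (K <= k)%nat -> / (INR k + 1) <= / (INR K + 1).
Proof.
  intros H. apply le_INR in H. pose proof (pos_INR K).
  apply Rinv_le_contravar; lra.
Qed.

Lemma cluster2 (u : nat -> pt) a b c d :
  (forall n, a <= fst (u n) <= b /\ c <= snd (u n) <= d) -> exists w, cluster u w.
Proof.
  intros Hb.
  destruct (Bolzano_Weierstrass (fun n => fst (u n)) _ (compact_P3 a b)) as [l1 Hl1].
  { intro n; apply Hb. }
  assert (Hval : forall k:nat, exists p, (k <= p)%nat /\ Rabs (fst (u p) - l1) < / (INR k + 1)).
  { intro k. apply (ValAdh_eps _ _ Hl1). apply Rinv_0_lt_compat. pose proof (pos_INR k); lra. }
  set (phi := fun k => proj1_sig (constructive_indefinite_description _ (Hval k))).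
  assert (Hphi : forall k, (k <= phi k)%nat /\ Rabs (fst (u (phi k)) - l1) < / (INR k + 1)).
  { intro k. unfold phi. destruct (constructive_indefinite_description _ (Hval k)); simpl; auto. }
  destruct (Bolzano_Weierstrass (fun k => snd (u (phi k))) _ (compact_P3 c d)) as [l2 Hl2].
  { intro n; apply Hb. }
  exists (l1, l2). intros e He N.
  destruct (small_inv e He) as [K HK].
  destruct (ValAdh_eps _ _ Hl2 e He (max N K)) as [k [Hk Hk2]].
  exists (phi k). destruct (Hphi k) as [Hp1 Hp2]. split; [lia|].
  apply dist2_lt; simpl; auto.
  pose proof (inv_mono k K ltac:(lia)). lra.
Qed.

Lemma cluster_le F u w a : contR F -> cluster u w ->
  (exists P0, forall p, (P0 <= p)%nat -> F (u p) <= a) -> F w <= a.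
Proof.
  intros HF Hc [P0 HP]. apply Rnot_lt_le; intro H.
  destruct (HF w (F w - a)) as [d [Hd Hw]]; [lra|].
  destruct (Hc d Hd P0) as [p [Hp Hp2]]. rewrite dist2_sym in Hp2.
  specialize (Hw _ Hp2). specialize (HP p Hp).
  assert (F w - F (u p) <= Rabs (F w - F (u p))) by apply Rle_abs. lra.
Qed.

Lemma cluster_ge F u w a : contR F -> cluster u w ->
  (exists P0, forall p, (P0 <= p)%nat -> a <= F (u p)) -> a <= F w.
Proof.
  intros HF Hc [P0 HP]. apply Rnot_lt_le; intro H.
  destruct (HF w (a - F w)) as [d [Hd Hw]]; [lra|].
  destruct (Hc d Hd P0) as [p [Hp Hp2]]. rewrite dist2_sym in Hp2.
  specialize (Hw _ Hp2). specialize (HP p Hp).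
  assert (F (u p) - F w <= Rabs (F w - F (u p))) by (rewrite Rabs_minus_sym; apply Rle_abs). lra.
Qed.

Lemma normalize z : exists k, 0 <= fst (Tk k z) <= 1.
Proof.
  exists (1 - up (fst z))%Z. unfold Tk; cbn [fst snd]. rewrite minus_IZR.
  destruct (archimed (fst z)). simpl. lra.
Qed.

Lemma choose_seq (P : nat -> pt -> Prop) : (forall k, exists z, P k z) ->
  exists u : nat -> pt, forall k, P k (u k).
Proof.
  intros H. exists (fun k => proj1_sig (constructive_indefinite_description _ (H k))).
  intro k. destruct (constructive_indefinite_description _ (H k)); auto.
Qed.

Lemma bounded_band F c0 c1 : contR F -> (forall z, F (T z) = F z) ->
  exists B, forall z, band c0 c1 z -> Rabs (F z) <= B.
Proof.
  intros HF HT. apply NNPP; intro HN.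
  assert (H : forall k : nat, exists z, band c0 c1 z /\ 0 <= fst z <= 1 /\ INR k < Rabs (F z)).
  { intro k. apply NNPP; intro H. apply HN. exists (INR k). intros z Hz.
    apply Rnot_lt_le; intro Hlt. destruct (normalize z) as [j Hj].
    apply H. exists (Tk j z). rewrite (invT_Tk F HT). repeat split; try apply Hj; try apply Hz; auto. }
  destruct (choose_seq _ H) as [u Hu].
  destruct (cluster2 u 0 1 c1 c0) as [w Hw].
  { intro n; destruct (Hu n) as [[? ?] [? ?]]; auto. }
  destruct (HF w 1 Rlt_0_1) as [d [Hd Hc]].
  destruct (INR_unbounded (Rabs (F w) + 1)) as [N HN'].
  destruct (Hw d Hd N) as [p [Hp Hp2]]. rewrite dist2_sym in Hp2.
  specialize (Hc _ Hp2). destruct (Hu p) as [_ [_ Hup]].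
  apply le_INR in Hp.
  pose proof (Rabs_triang_inv (F (u p)) (F w)). rewrite Rabs_minus_sym in Hc. lra.
Qed.

Section Main.
Variables (f finv : pt -> pt) (c0 c1 : R).
Hypothesis Hcont : continuous2 f.
Hypothesis Hcontinv : continuous2 finv.
Hypothesis Hinv1 : forall z, finv (f z) = z.
Hypothesis Hinv2 : forall z, f (finv z) = z.
Hypothesis HT : forall z, f (T z) = T (f z).
Hypothesis H1c0 : forall z, hline c0 z -> Uminus c0 (f z).
Hypothesis H1c1 : forall z, hline c1 z -> Uminus c1 (f z).
Hypothesis H3ne0 : exists z, Theta f finv (band c0 c1) z.
Hypothesis H3rho0 : forall v, rot_set f finv (Theta f finv (band c0 c1)) v ->
              exists r, v = Fin r /\ 0 < r.

Let A0 := band c0 c1.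
Let Th := Theta f finv A0.

Lemma I1 : forall w, snd w <= c1 -> snd (f w) < c1.
Proof.
  destruct (dich f finv c1 Hcont Hcontinv Hinv1 Hinv2 H1c1) as [HA|HB].
  - intros w Hw. destruct (Rle_lt_or_eq_dec _ _ Hw); auto. apply H1c1; auto.
  - exfalso. destruct H3ne0 as [p [Hp Hall]].
    specialize (Hall 1%Z). simpl in Hall. unfold band in *.
    destruct (Rle_lt_or_eq_dec c1 (snd p) (proj1 Hp)) as [H|H].
    + specialize (HB p H). lra.
    + specialize (H1c1 p (eq_sym H)). unfold Uminus in H1c1. lra.
Qed.

Lemma cont_sndf : contR (fun z => snd (f z)).
Proof. apply contR_comp; auto; apply contR_snd. Qed.

Lemma I0 : forall w, snd w <= c0 -> snd (f w) < c0.
Proof.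
  destruct (dich f finv c0 Hcont Hcontinv Hinv1 Hinv2 H1c0) as [HA|HB].
  - intros w Hw. destruct (Rle_lt_or_eq_dec _ _ Hw); auto. apply H1c0; auto.
  - exfalso.
    destruct (bounded_band (fun z => snd (f z)) c0 c1 cont_sndf) as [Bd HBd].
    { intro z. rewrite HT; reflexivity. }
    destruct H3ne0 as [p [Hp _]]. unfold band in Hp.
    set (q := (0, Rmax c0 Bd + 1)). set (w := finv q).
    assert (Hq : f w = q) by apply Hinv2.
    pose proof (Rmax_l c0 Bd); pose proof (Rmax_r c0 Bd).
    assert (snd q = Rmax c0 Bd + 1) by reflexivity.
    destruct (Rle_or_lt c0 (snd w)) as [Hw|Hw].
    + destruct (Rle_lt_or_eq_dec _ _ Hw) as [Hw'|Hw'].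
      * specialize (HB w Hw'). rewrite Hq in HB. lra.
      * specialize (H1c0 w (eq_sym Hw')). unfold Uminus in H1c0. rewrite Hq in H1c0. lra.
    + destruct (Rle_or_lt (snd w) c1) as [H2|H2].
      * pose proof (I1 w H2) as H3. rewrite Hq in H3. lra.
      * specialize (HBd w ltac:(unfold band; lra)). rewrite Hq in HBd.
        pose proof (Rle_abs (snd q)). lra.
Qed.

Lemma seg_band z n : A0 z -> A0 (Nat.iter n f z) ->
  forall j, (j <= n)%nat -> A0 (Nat.iter j f z).
Proof.
  unfold A0, band. intros Hz Hn j Hj. split.
  - apply Rnot_lt_le; intro H.
    assert (Hi : forall i, snd (Nat.iter (i + j) f z) < c1).
    { induction i; simpl; auto. apply I1; lra. }
    specialize (Hi (n - j)%nat). replace (n - j + j)%nat with n in Hi by lia. lra.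
  - clear Hj. induction j; simpl; [lra|]. pose proof (I0 _ IHj); lra.
Qed.

Definition disp (z : pt) := p1 (f z) - p1 z.

Lemma cont_disp : contR disp.
Proof. apply contR_minus; [apply contR_comp; auto|]; apply contR_fst. Qed.

Lemma step_bound : exists B, 0 <= B /\ forall z, A0 z -> Rabs (disp z) <= B.
Proof.
  destruct (bounded_band disp c0 c1 cont_disp) as [B HB].
  { intro z. unfold disp, p1. rewrite HT. unfold T; simpl. ring. }
  exists B. split; auto. destruct H3ne0 as [p [Hp _]].
  specialize (HB p Hp). pose proof (Rabs_pos (disp p)); lra.
Qed.

Lemma disp_lower B : (forall z, A0 z -> Rabs (disp z) <= B) ->
  forall t z, (forall i, (i < t)%nat -> A0 (Nat.iter i f z)) ->
  - INR t * B <= p1 (Nat.iter t f z) - p1 z.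
Proof.
  intros HB t; induction t; intros z Hz.
  - simpl; lra.
  - rewrite S_INR. simpl Nat.iter.
    specialize (IHt z (fun i Hi => Hz i ltac:(lia))).
    specialize (HB _ (Hz t ltac:(lia))). unfold disp in HB.
    assert (- B <= p1 (f (Nat.iter t f z)) - p1 (Nat.iter t f z)).
    { pose proof (Rle_abs (- (p1 (f (Nat.iter t f z)) - p1 (Nat.iter t f z)))).
      rewrite Rabs_Ropp in H. lra. }
    lra.
Qed.


Lemma Th_fpow z n : Th z -> Th (fpow f finv n z).
Proof.
  intros [Hz Hall]. split; auto. intro m. rewrite <- (fpow_add f finv Hinv1 Hinv2); auto.
Qed.

Lemma Th_iter z : Th z -> forall i, A0 (Nat.iter i f z).
Proof. intros [_ Hall] i. rewrite <- (fpow_nat f finv). apply Hall. Qed.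

Lemma rate_pos : exists N, (1 <= N)%nat /\ forall z, Th z -> p1 (Nat.iter N f z) - p1 z > 1.
Proof.
  destruct step_bound as [B [HB0 HB]].
  apply NNPP; intro HN.
  assert (H : forall k, exists z, Th z /\ p1 (Nat.iter (S k) f z) - p1 z <= 1).
  { intro k. apply NNPP; intro H. apply HN. exists (S k). split; [lia|].
    intros z Hz. apply Rnot_le_lt; intro. apply H; eauto. }
  destruct (choose_seq _ H) as [u Hu].
  set (r := fun k => (p1 (Nat.iter (S k) f (u k)) - p1 (u k)) / INR (S k)).
  assert (Hrb : forall k, - B <= r k <= / (INR k + 1)).
  { intro k. destruct (Hu k) as [Hth Hle].
    pose proof (disp_lower B HB (S k) (u k) (fun i _ => Th_iter _ Hth i)) as Hlo.
    rewrite S_INR in *. pose proof (pos_INR k).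
    assert (Hs : 0 < INR k + 1) by lra.
    assert (E : r k * (INR k + 1) = p1 (Nat.iter (S k) f (u k)) - p1 (u k))
      by (unfold r; rewrite S_INR; field; lra).
    assert (E2 : / (INR k + 1) * (INR k + 1) = 1) by (field; lra).
    split; nra. }
  destruct (Bolzano_Weierstrass r _ (compact_P3 (-B) 1)) as [l Hl].
  { intro k. pose proof (Hrb k). pose proof (inv_mono k 0 ltac:(lia)). simpl in H1.
    replace (0 + 1) with 1 in H1 by ring. rewrite Rinv_1 in H1. lra. }
  assert (Hl0 : l <= 0).
  { apply Rnot_lt_le; intro Hpos.
    destruct (small_inv (l/2) ltac:(lra)) as [K HK].
    destruct (ValAdh_eps _ _ Hl (l/2) ltac:(lra) K) as [p [Hp Hp2]].
    pose proof (inv_mono p K Hp). pose proof (Hrb p).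
    pose proof (Rle_abs (-(r p - l))). rewrite Rabs_Ropp in H2. lra. }
  destruct (H3rho0 (Fin l)) as [r0 [Er Hr0]].
  { intros m Hm e He.
    destruct (ValAdh_eps _ _ Hl e He m) as [p [Hp Hp2]].
    exists (r p). split; auto.
    exists (S p), (u p). destruct (Hu p) as [Hth _].
    split; [lia|]. split; auto. split; [apply Th_fpow; auto|].
    unfold r. rewrite (fpow_nat f finv). reflexivity. }
  injection Er; intro; subst; lra.
Qed.

Lemma cont2_fpow n : continuous2 (fpow f finv n).
Proof.
  destruct n.
  - intros z e He; exists e; split; auto.
  - exact (cont2_iter f _ Hcont).
  - exact (cont2_iter finv _ Hcontinv).
Qed.

Definition Delta N z := p1 (Nat.iter N f z) - p1 z.

Lemma cont_Delta N : contR (Delta N).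
Proof.
  apply contR_minus; [apply contR_comp; [apply contR_fst| apply cont2_iter; auto]|apply contR_fst].
Qed.

Lemma Delta_T N z : Delta N (T z) = Delta N z.
Proof. unfold Delta, p1. rewrite (commT_iter f HT). unfold T; simpl; ring. Qed.

Lemma transfer N : (forall z, Th z -> Delta N z > 1) ->
  exists L : nat, forall z, (forall j : Z, (Z.abs j <= Z.of_nat L)%Z -> A0 (fpow f finv j z)) ->
    Delta N z > 1/2.
Proof.
  intros HTh. apply NNPP; intro HN.
  assert (H : forall L : nat, exists z, (forall j : Z, (Z.abs j <= Z.of_nat L)%Z -> A0 (fpow f finv j z))
     /\ Delta N z <= 1/2 /\ 0 <= fst z <= 1).
  { intro L. apply NNPP; intro H. apply HN. exists L. intros z Hz.
    apply Rnot_le_lt; intro Hd. destruct (normalize z) as [k Hk]. apply H.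
    exists (Tk k z). split; [|split; auto].
    - intros j Hj. rewrite (commT_Tk (fpow f finv j) (commT_fpow f finv Hinv1 Hinv2 HT j)).
      specialize (Hz j Hj). unfold A0, band in *; simpl; exact Hz.
    - rewrite (invT_Tk (Delta N) (Delta_T N)); auto. }
  destruct (choose_seq _ H) as [u Hu].
  destruct (cluster2 u 0 1 c1 c0) as [w Hw].
  { intro n. destruct (Hu n) as [Ha [_ Hf]]. specialize (Ha 0%Z ltac:(lia)). exact (conj Hf Ha). }
  assert (Hall : forall n, A0 (fpow f finv n w)).
  { intro n. unfold A0, band. split.
    - apply (cluster_ge (fun z => snd (fpow f finv n z)) u w c1); auto.
      + apply contR_comp; [apply contR_snd| apply cont2_fpow].
      + exists (Z.abs_nat n). intros p Hp. destruct (Hu p) as [Ha _].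
        apply (Ha n); lia.
    - apply (cluster_le (fun z => snd (fpow f finv n z)) u w c0); auto.
      + apply contR_comp; [apply contR_snd| apply cont2_fpow].
      + exists (Z.abs_nat n). intros p Hp. destruct (Hu p) as [Ha _].
        apply (Ha n); lia. }
  assert (Hth : Th w) by (split; [apply (Hall 0%Z)| exact Hall]).
  assert (Delta N w <= 1/2).
  { apply (cluster_le (Delta N) u w); [apply cont_Delta| auto|].
    exists 0%nat. intros p _. apply (Hu p). }
  specialize (HTh w Hth). lra.
Qed.

Lemma main_fwd M : 0 < M -> exists n0 : nat, forall n, (n0 <= n)%nat -> forall z,
  A0 z -> A0 (Nat.iter n f z) -> p1 (Nat.iter n f z) - p1 z > M.
Proof.
  intros HM.
  destruct step_bound as [B [HB0 HB]].
  destruct rate_pos as [N [HN1 HN]].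
  destruct (transfer N HN) as [L HL].
  assert (HNpos : 1 <= INR N) by (apply le_INR in HN1; simpl in HN1; lra).
  pose proof (pos_INR L).
  set (Q := INR N * (2 * (M + (2 * INR L + INR N) * B) + 1) + 2 * INR L).
  destruct (INR_unbounded Q) as [n0 Hn0]. exists n0.
  intros n Hn z Hz Hzn.
  pose proof (seg_band z n Hz Hzn) as Hseg.
  apply le_INR in Hn.
  assert (HQ : 2 * INR L < INR n).
  { assert (0 < INR N * (2 * (M + (2 * INR L + INR N) * B) + 1)).
    { apply Rmult_lt_0_compat; [lra|]. assert (0 <= (2 * INR L + INR N) * B) by (apply Rmult_le_pos; lra). lra. }
    unfold Q in Hn0. lra. }
  assert (H2L : (L + L < n)%nat).
  { apply INR_lt. rewrite plus_INR. lra. }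
  set (G := fun s => p1 (Nat.iter s f z)).
  assert (Hblock : forall i, (L <= i)%nat -> (i + L <= n)%nat -> G (N + i)%nat - G i > 1/2).
  { intros i Hi1 Hi2. unfold G. rewrite Nat.iter_add. apply HL.
    intros j Hj. rewrite (fpow_nat_add f finv Hinv1 Hinv2).
    replace (j + Z.of_nat i)%Z with (Z.of_nat (Z.to_nat (j + Z.of_nat i))) by lia.
    rewrite (fpow_nat f finv). apply Hseg. lia. }
  assert (Hseg2 : forall a t, (a + t <= n)%nat -> - INR t * B <= G (t + a)%nat - G a).
  { intros a t Hat. unfold G. rewrite Nat.iter_add. apply (disp_lower B HB).
    intros i Hi. rewrite <- Nat.iter_add. apply Hseg. lia. }
  assert (Hclaim : forall t, (L + t + L <= n)%nat ->
            G (L + t)%nat - G L >= (INR t / INR N - 1) / 2 - INR N * B).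
  { intro t. induction t as [t IH] using (well_founded_induction lt_wf). intros Ht.
    destruct (lt_dec t N) as [HtN|HtN].
    - pose proof (Hseg2 L t ltac:(lia)). replace (t + L)%nat with (L + t)%nat in H0 by lia.
      apply lt_INR in HtN. pose proof (pos_INR t).
      assert (INR t / INR N < 1).
      { apply (Rmult_lt_reg_r (INR N)); [lra|]. unfold Rdiv. rewrite Rmult_assoc, Rinv_l; lra. }
      assert (INR t * B <= INR N * B) by (apply Rmult_le_compat_r; lra). lra.
    - assert (Et : t = (t - N + N)%nat) by lia. set (t' := (t - N)%nat) in Et. clearbody t'.
      assert (Ht' : (t' < t)%nat) by lia.
      specialize (IH t' Ht' ltac:(lia)).
      specialize (Hblock (L + t')%nat ltac:(lia) ltac:(lia)).
      replace (N + (L + t'))%nat with (L + t)%nat in Hblock by lia.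
      assert (E : INR t / INR N = INR t' / INR N + 1).
      { rewrite Et, plus_INR. field. lra. }
      lra. }
  specialize (Hclaim (n - L - L)%nat ltac:(lia)).
  pose proof (Hseg2 0%nat L ltac:(lia)) as Hhead.
  pose proof (Hseg2 (n - L)%nat L ltac:(lia)) as Htail.
  replace (L + 0)%nat with L in Hhead by lia.
  replace (L + (n - L))%nat with n in Htail by lia.
  replace (L + (n - L - L))%nat with (n - L)%nat in Hclaim by lia.
  rewrite !minus_INR in Hclaim by lia.
  assert (HX : 2 * (M + (2 * INR L + INR N) * B) + 1 < (INR n - INR L - INR L) / INR N).
  { apply (Rmult_lt_reg_r (INR N)); [lra|]. unfold Rdiv. rewrite Rmult_assoc, Rinv_l by lra.
    unfold Q in Hn0. lra. }
  unfold G in *. simpl Nat.iter in Hhead. lra.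
Qed.

End Main.
Theorem lemma6p8
  (f finv : pt -> pt)
  (Hcont : continuous2 f) (Hcontinv : continuous2 finv)
  (Hinv1 : forall z, finv (f z) = z) (Hinv2 : forall z, f (finv z) = z)
  (Hiso : isotopic_to_id f)
  (HT : forall z, f (T z) = T (f z))
  (c0 c1 c2 : R)
  (* (H1) *)
  (H1a : forall z, hline c0 z -> Uplus c1 z)
  (H1b : forall z, hline c1 z -> Uplus c2 z)
  (H1c0 : forall z, hline c0 z -> Uminus c0 (f z))
  (H1c1 : forall z, hline c1 z -> Uminus c1 (f z))
  (H1c2 : forall z, hline c2 z -> Uminus c2 (f z))
  (* (H2) *)
  (H2 : forall n : nat, (1 <= n)%nat ->
          exists z, hline c0 z /\ hline c2 (fpow f finv (Z.of_nat n) z))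
  (* (H3) *)
  (H3ne0 : exists z, Theta f finv (band c0 c1) z)
  (H3ne1 : exists z, Theta f finv (band c1 c2) z)
  (H3rho0 : forall v, rot_set f finv (Theta f finv (band c0 c1)) v ->
              exists r, v = Fin r /\ 0 < r)
  (H3rho1 : forall v, rot_set f finv (Theta f finv (band c1 c2)) v ->
              exists r, v = Fin r /\ r < 0) :
  forall M : R, 0 < M ->
  exists n0 : nat,
    forall K : pt -> Prop,
      compact2 K ->
      (forall z, K z -> band c0 c1 z) ->
      (forall z w, K z -> K w -> Rabs (p1 z - p1 w) <= M) ->
      forall n : Z, (Z.of_nat n0 <= Z.abs n)%Z ->
        forall z, K z -> ~ K (fpow f finv n z).
Proof.
  intros M HM.
  destruct (main_fwd f finv c0 c1 Hcont Hcontinv Hinv1 Hinv2 HT H1c0 H1c1 H3ne0 H3rho0 M HM)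
    as [n0 Hn0].
  exists n0. intros K HKc HKb HKd n Hn z Hz HKn.
  destruct (Z_le_gt_dec 0 n) as [Hpos|Hneg].
  - replace n with (Z.of_nat (Z.to_nat n)) in HKn by lia.
    rewrite (fpow_nat f finv) in HKn.
    specialize (Hn0 (Z.to_nat n) ltac:(lia) z (HKb z Hz) (HKb _ HKn)).
    specialize (HKd _ _ HKn Hz). pose proof (Rle_abs (p1 (Nat.iter (Z.to_nat n) f z) - p1 z)). lra.
  - set (w := fpow f finv n z) in HKn.
    assert (Ez : fpow f finv (Z.of_nat (Z.to_nat (- n))) w = z).
    { unfold w. rewrite <- (fpow_add f finv Hinv1 Hinv2).
      replace (Z.of_nat (Z.to_nat (- n)) + n)%Z with 0%Z by lia. reflexivity. }
    rewrite (fpow_nat f finv) in Ez.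
    specialize (Hn0 (Z.to_nat (- n)) ltac:(lia) w (HKb w HKn) ltac:(rewrite Ez; apply HKb; auto)).
    rewrite Ez in Hn0.
    specialize (HKd _ _ Hz HKn). pose proof (Rle_abs (p1 z - p1 w)). lra.
Qed.
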